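(* Let $\mathcal{M}\subseteq\mathbb{N}_0$ and let $k=\min(\mathcal{M})$ if $\mathcal{M}\ne\varnothing$ and $k=0$ otherwise. Then $\lim_{i\to\infty}\mathcal{M}^i=\mathcal{M}_k$, where $\mathcal{M}_0=\varnothing$ and, for $k\ge1$, $\mathcal{M}_k=\{ip_k+j:\ i\in\mathbb{N}_0,\ k\le j\le 2k-1\}$ with $p_k=3k-1$.
   Context: A one-heap game is a set $\mathcal{M}\subseteq\mathbb{N}_0$ of moves; from position $x\in\mathbb{N}_0$ one may move to $y\in\mathbb{N}_0$ iff $x-y\in\mathcal{M}$. Misère play: a player who cannot move wins. If $0\in\mathcal{M}$, $P(\mathcal{M})=\varnothing$. Otherwise: a position is an N-position if it has no option or some option is a P-position; otherwise it is a P-position; $P(\mathcal{M})$ denotes the set of P-positions. $\mathcal{M}^\star=P(\mathcal{M})$, $\mathcal{M}^0=\mathcal{M}$, $\mathcal{M}^i=(\mathcal{M}^{i-1})^\star$, and $\lim_i\mathcal{M}^i$ is the pointwise limit: the set of $x$ with $x\in\mathcal{M}^i$ for all sufficiently large $i$, where every $x$ is eventually always in or eventually always out of $\mathcal{M}^i$. *)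

(* Defs.v *)
From mathcomp Require Import all_boot.
Set Implicit Arguments. Unset Strict Implicit. Unset Printing Implicit Defensive.

Definition nset := nat -> bool.

(* Given the table t of P-statuses of positions 0..x-1 (entry y is true iff y
   is a P-position), decide whether x is a P-position, assuming 0 \notin M
   (so every option y of x satisfies y < x).
   x is an N-position iff it has no option or some option is a P-position;
   otherwise it is a P-position. *)
Definition Pstep (M : nset) (t : seq bool) (x : nat) : bool :=
  has (fun y => M (x - y)) (iota 0 x) &&
  all (fun y => M (x - y) ==> ~~ nth false t y) (iota 0 x).

Fixpoint ptab (M : nset) (n : nat) : seq bool :=
  match n with
  | 0 => [::]
  | n'.+1 => let t := ptab M n' in rcons t (Pstep M t n')
  end.

(* P(M) = M^star: empty if 0 \in M, otherwise the set of P-positions. *)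
Definition Pset (M : nset) : nset :=
  fun x => ~~ M 0 && nth false (ptab M x.+1) x.

Definition Miter (M : nset) (i : nat) : nset := iter i Pset M.

Definition Mk (k : nat) (x : nat) : Prop :=
  1 <= k /\ exists i j, k <= j <= 2 * k - 1 /\ x = i * (3 * k - 1) + j.

Definition pointwise_limit (f : nat -> nset) (L : nat -> Prop) : Prop :=
  forall x, exists N, forall i, N <= i -> (f i x <-> L x).

(* Main.v *)
Require Import Defs.
From mathcomp Require Import all_boot.
From mathcomp Require Import zify.
Set Implicit Arguments. Unset Strict Implicit.

Lemma size_ptab M n : size (ptab M n) = n.
Proof. by elim: n => //= n IH; rewrite size_rcons IH. Qed.

Definition Pv (M : nset) x := nth false (ptab M x.+1) x.

Lemma nth_ptab M n x : x < n -> nth false (ptab M n) x = Pv M x.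
Proof.
elim: n => // n IH; rewrite ltnS leq_eqVlt => /orP [/eqP ->|Hx] //=.
by rewrite nth_rcons size_ptab Hx IH.
Qed.

Lemma Pv_eq M x : Pv M x =
  has (fun y => M (x - y)) (iota 0 x) &&
  all (fun y => M (x - y) ==> ~~ Pv M y) (iota 0 x).
Proof.
rewrite /Pv /= nth_rcons size_ptab ltnn eqxx /Pstep; congr (_ && _).
apply: eq_in_all => y; rewrite mem_iota add0n => /andP [_ Hy].
by rewrite nth_ptab.
Qed.

Definition mkb k x := (0 < k) && (k <= x %% (3*k-1)) && (x %% (3*k-1) <= 2*k-1).

Lemma mkb_iff k x : mkb k x <-> Mk k x.
Proof.
rewrite /mkb /Mk; split.
  move=> /andP [/andP [Hk H1] H2]; split => //.
  exists (x %/ (3*k-1)), (x %% (3*k-1)); rewrite H1 H2; split => //.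
  exact: divn_eq.
move=> [Hk [i [j [/andP [H1 H2] ->]]]].
rewrite modnMDl modn_small; last lia.
by rewrite Hk H1 H2.
Qed.

Lemma core1 k y z : Mk k y -> Mk k z -> Mk k (y + z) -> False.
Proof.
rewrite /Mk; set p := 3*k-1.
have Hp : p + 1 = 3 * k /\ 0 < k -> True by [].
move=> [Hk [i1 [j1 [H1 ->]]]] [_ [i2 [j2 [H2 ->]]]] [_ [i3 [j3 [H3 E]]]].
have Hp' : p + 1 = 3 * k by rewrite /p; lia.
clearbody p.
case: (leqP i3 (i1 + i2)) => Hi.
  have : i3 * p <= (i1 + i2) * p by rewrite leq_mul2r Hi orbT.
  rewrite mulnDl; lia.
have : (i1 + i2).+1 * p <= i3 * p by rewrite leq_mul2r Hi orbT.
rewrite mulSn mulnDl; lia.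
Qed.

Lemma core2 k x : 0 < k -> ~~ mkb k x ->
  x < k \/ exists y, y < x /\ Mk k y /\ Mk k (x - y).
Proof.
move=> Hk; rewrite /mkb /Mk Hk /=; set p := 3*k-1.
have Hp' : p + 1 = 3 * k by rewrite /p; lia.
have Hr : x %% p < p by apply: ltn_pmod; lia.
have Hx := divn_eq x p.
move: Hr Hx; move: (x %/ p) (x %% p) => q r Hr Hx Hn.
clearbody p.
have Hn' : r < k \/ 2 * k <= r by move: Hn; case: (leqP k r) => /=; lia.
case: Hn' => Hr'.
  case: q Hx => [|q] Hx; first by left; lia.
  right; exists (q * p + (2*k-1)); rewrite mulSn in Hx; split; first lia.
  split; first by split => //; exists q, (2*k-1); split => //; lia.
  split => //; exists 0, (k + r); split; lia.
right; exists (q * p + k); split; first lia.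
split; first by split => //; exists q, k; split => //; lia.
split => //; exists 0, (r - k); split; lia.
Qed.

Lemma mkb_ge k z : mkb k z -> k <= z.
Proof.
move=> /andP [/andP [_ H] _]; apply: leq_trans H _; exact: leq_mod.
Qed.

Lemma agree k (M : nset) n : 0 < k -> k < n -> (forall y, y < n -> M y = mkb k y) ->
  forall x, x <= n -> Pv M x = mkb k x.
Proof.
move=> Hk Hkn HM x; elim/ltn_ind: x => x IH Hxn.
rewrite Pv_eq.
case Hm: (mkb k x).
  have Hkx := mkb_ge Hm.
  apply/andP; split.
    apply/hasP; exists (x - k); first by rewrite mem_iota; lia.
    by rewrite (_ : x - (x - k) = k) ?HM //; [rewrite /mkb Hk modn_small ?leqnn /=; lia | lia].
  apply/allP => y; rewrite mem_iota add0n => /andP [_ Hy].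
  case: y Hy => [|y] Hy.
    rewrite IH; [|lia|lia].
    by rewrite /mkb mod0n (leqNgt k 0) Hk /= implybT.
  rewrite HM; [|lia]. rewrite IH; [|lia|lia].
  apply/implyP => H1; apply/negP => H2.
  have E : y.+1 + (x - y.+1) = x by lia.
  apply: (core1 (k:=k) (y := y.+1) (z := x - y.+1)); [exact/mkb_iff|exact/mkb_iff|by rewrite E; apply/mkb_iff].
case: (core2 Hk (negbT Hm)) => [Hx | [y [Hy [Hy1 Hy2]]]].
  apply/negbTE/negP => /andP [/hasP [y _ Hy] _].
  move: Hy; rewrite HM; last lia.
  by move/mkb_ge; lia.
apply/negbTE; rewrite negb_and; apply/orP; right.
apply/allPn; exists y; first by rewrite mem_iota; lia.
have Hky : k <= y by apply: mkb_ge; apply/mkb_iff.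
rewrite HM; [|lia]. rewrite IH; [|lia|lia].
by move/mkb_iff: Hy1 => ->; move/mkb_iff: Hy2 => ->.
Qed.

Lemma Pset_empty (A : nset) : (forall x, A x = false) -> forall x, Pset A x = false.
Proof.
move=> HA x; rewrite /Pset /Pv -/(Pv A x) Pv_eq.
have -> : has (fun y => A (x - y)) (iota 0 x) = false.
  by apply/negbTE/hasPn => y _; rewrite HA.
by rewrite andbF.
Qed.

Lemma Miter_empty (A : nset) : (forall x, A x = false) -> forall i x, Miter A i x = false.
Proof.
move=> HA; elim => [|i IH] x //=; exact: Pset_empty.
Qed.

Theorem corollary7 (M : nset) (k : nat)
  (hk : ((forall x, M x = false) /\ k = 0) \/ (M k /\ forall x, M x -> k <= x)) :
  pointwise_limit (Miter M) (Mk k).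
Proof.
have Mk0 : forall x, ~ Mk 0 x by move=> x [].
case: hk => [[HM ->] | [HMk Hmin]].
  move=> x; exists 0 => i _; rewrite Miter_empty //; split => // /Mk0 [].
case: k HMk Hmin => [|k] HMk Hmin.
  move=> x; exists 1 => i Hi.
  case: i Hi => // i _.
  have E : forall y, Miter M 1 y = false by move=> y; rewrite /= /Pset HMk.
  have : Miter M i.+1 x = false.
    rewrite -addn1 /Miter iterD -/(Miter (Miter M 1) i).
    by apply: Miter_empty.
  by move=> ->; split => // /Mk0 [].
set K := k.+1.
have HK : 0 < K by [].
have step : forall i y, y < K.+1 + i -> Miter M i y = mkb K y.
  elim => [|i IH] y Hy.
    rewrite addn0 ltnS leq_eqVlt in Hy; case/orP: Hy => [/eqP -> | Hy] /=.
      by rewrite HMk /mkb modn_small ?leqnn /= ; lia.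
    apply/esym; case Hm: (M y); first by move: (Hmin y Hm); lia.
    by apply/negbTE/negP => /mkb_ge; lia.
  rewrite /= /Pset.
  have H0 : Miter M i 0 = false by rewrite IH; [rewrite /mkb mod0n | lia].
  rewrite H0 /= -/(Pv (Miter M i) y).
  apply: (agree HK (n := K.+1 + i)); [lia | | lia].
  by move=> z Hz; apply: IH.
move=> x; exists x => i Hi.
rewrite step; last lia.
exact: mkb_iff.
Qed.
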